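(* Let $k\ge0$, $\ell=2k$, and let $G=(X\cup Y,E)$ be a bipartite graph without isolated vertices, with a linear order $<_X$ of $X$ listing $X$ as $x_1,\dots,x_{|X|}$. If $e=\{x_p,y\}$ and $f=\{x_q,y'\}$ are distinct edges with $p+\ell<q$, then in every 2-layer $k$-planar drawing $(<_X,<_Y)$ of $G$ (with this $<_X$) it holds that $y<_Yy'$ or $y=y'$.
   Context: A 2-layer drawing of a bipartite graph $G=(X\cup Y,E)$ ($X\cap Y=\emptyset$, $E\subseteq X\times Y$) is a pair $(<_X,<_Y)$ of strict linear orders on $X$ and $Y$. Edges $\{x,y\},\{x',y'\}$ with $x\ne x'\in X$, $y\ne y'\in Y$ cross if $x<_Xx'$ and $y'<_Yy$. The drawing is $k$-planar if every edge crosses at most $k$ edges. *)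

(* Defs.v *)
From mathcomp Require Import all_boot all_order.
Set Implicit Arguments. Unset Strict Implicit. Unset Printing Implicit Defensive.

Definition strict_linear_order (T : finType) (r : rel T) : Prop :=
  irreflexive r /\ transitive r /\ (forall x y, x != y -> r x y || r y x).

Definition no_isolated (X Y : finType) (E : {set X * Y}) : Prop :=
  (forall x : X, exists y : Y, (x, y) \in E) /\
  (forall y : Y, exists x : X, (x, y) \in E).

(* Position (0-based) of x in the listing of X by ltX. *)
Definition pos (X : finType) (ltX : rel X) (x : X) : nat :=
  #|[set z | ltX z x]|.

Definition cross (X Y : finType) (ltX : rel X) (ltY : rel Y) (e f : X * Y) : bool :=
  (ltX e.1 f.1 && ltY f.2 e.2) || (ltX f.1 e.1 && ltY e.2 f.2).

Definition kplanar_drawing (X Y : finType) (E : {set X * Y})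
    (ltX : rel X) (ltY : rel Y) (k : nat) : Prop :=
  strict_linear_order ltX /\ strict_linear_order ltY /\
  forall e, e \in E -> #|[set f in E | cross ltX ltY e f]| <= k.

(* Main.v *)
Require Import Defs.
From mathcomp Require Import all_boot all_order.
From mathcomp Require Import zify.

Theorem lemma3p4 (k : nat) (X Y : finType) (E : {set X * Y}) (ltX : rel X)
    (ltY : rel Y) (xp xq : X) (y y' : Y) :
  no_isolated E ->
  strict_linear_order ltX ->
  (xp, y) \in E -> (xq, y') \in E -> (xp, y) != (xq, y') ->
  pos ltX xp + 2 * k < pos ltX xq ->
  kplanar_drawing E ltX ltY k ->
  ltY y y' || (y == y').
Proof.
move=> [nX _] [irrX [trX totX]] He Hf Hef Hpos [_ [[irrY [trY totY]] Hk]].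
have ltpq : ltX xp xq.
  case: (eqVneq xp xq) => [eq|ne].
    by move: Hpos; rewrite eq; lia.
  case/orP: (totX _ _ ne) => // lqp.
  have : pos ltX xq <= pos ltX xp.
    apply: subset_leq_card; apply/subsetP => z; rewrite !inE => h.
    exact: trX h lqp.
  lia.
apply/negPn/negP; rewrite negb_or => /andP [nlt neq].
have lty : ltY y' y.
  have ne : y' != y by rewrite eq_sym.
  by case/orP: (totY _ _ ne) => //; rewrite (negbTE nlt).
set M := [set x | ltX xp x && ltX x xq].
have cardM : 2 * k <= #|M|.
  have : pos ltX xq <= #|M| + pos ltX xp + 1.
    rewrite /pos.
    apply: leq_trans (_ : #|M :|: [set z | ltX z xp] :|: [set xp]| <= _).
      apply: subset_leq_card; apply/subsetP => z; rewrite !inE => hz.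
      case: (eqVneq z xp) => [->|nzp]; first by rewrite orbT.
      case/orP: (totX _ _ nzp) => [->|->]; last by rewrite hz.
      by rewrite orbT.
    apply: leq_trans (leq_card_setU _ _) _.
    rewrite cards1 leq_add2r.
    exact: leq_card_setU.
  lia.
pose g x := odflt y [pick z | (x, z) \in E].
have gE x : (x, g x) \in E.
  rewrite /g; case: pickP => [z -> //|h].
  by case: (nX x) => z hz; rewrite h in hz.
pose h x := (x, g x).
have hinj : injective h by move=> a b [].
set Se := [set f in E | cross ltX ltY (xp, y) f].
set Sf := [set f in E | cross ltX ltY (xq, y') f].
have sub : (xp, y) |: ((xq, y') |: (h @: M)) \subset Se :|: Sf.
  apply/subsetP => z; rewrite !inE => /orP [/eqP ->|/orP [/eqP ->|]].
  - by rewrite He /cross /= ltpq lty !orbT.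
  - by rewrite Hf /cross /= ltpq lty.
  move/imsetP => [x]; rewrite inE => /andP [h1 h2] ->.
  rewrite gE /cross /= h1 h2 /=.
  case: (eqVneq (g x) y) => [->|ngy]; first by rewrite lty !orbT.
  case/orP: (totY _ _ ngy) => [->//|hy].
  by rewrite (trY _ _ _ lty hy) !orbT.
have c1 := subset_leq_card sub.
rewrite cardsU1 cardsU1 (card_imset _ hinj) in c1.
have nin1 : (xq, y') \notin h @: M.
  apply/imsetP => [[x]]; rewrite inE => /andP [_ h2] [e1 _].
  by move: h2; rewrite -e1 irrX.
have nin2 : (xp, y) \notin (xq, y') |: h @: M.
  rewrite !inE negb_or Hef /=; apply/imsetP => [[x]]; rewrite inE => /andP [h1 _] [e1 _].
  by move: h1; rewrite -e1 irrX.
rewrite nin1 nin2 in c1.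
case: (leq_card_setU Se Sf) => c2 _.
rewrite /= in c1.
have := Hk _ He; have := Hk _ Hf.
rewrite -/Se -/Sf.
move=> a b.
have := leq_trans c1 c2.
have := leq_add a b.
move: cardM; clear; lia.
Qed.
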